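(* Let $q$ be a primitive $n$-th root of unity. The Fourier transform $\mathcal F:{\mathfrak c}_q[SL_2]\to{\mathfrak u}_q(sl_2)$, $\mathcal F(h)=\sum_a\big(\int e_ah\big)f^a$, is invertible and given by $$\mathcal F(X^\alpha t^\beta Y^\gamma)=\sum_{l=0}^{n-1}\frac{q^{-(l+\alpha)(1-\beta)+\beta(n-1-\gamma)}}{n\,[n-1-\alpha]_{q^{-1}}!\,[n-1-\gamma]_q!}\,F^{n-1-\alpha}K^lE^{n-1-\gamma}$$ for $0\le\alpha,\beta,\gamma\le n-1$.
   Context: ${\mathfrak c}_q[SL_2]$ is the Hopf algebra generated by $X,t,Y$ with $X^n=Y^n=0$, $t^n=1$, $YX=XY$, $Xt=qtX$, $Yt=qtY$, $\Delta t=q\sum_{a=0}^{n-2}(q-1)^{a-1}(1-q^{-a-1})tY^a\otimes X^at$, $\Delta X=X\otimes1+\sum_{a=0}^{n-2}(q-1)^atY^a\otimes X^{a+1}$, $\Delta Y=1\otimes Y+\sum_{a=0}^{n-2}(1-q^{-1})^aY^{a+1}\otimes X^at$. ${\mathfrak u}_q(sl_2)$ is the Hopf algebra generated by $E,F,K$ with $E^n=F^n=0$, $K^n=1$, $KEK^{-1}=q^{-1}E$, $KFK^{-1}=qF$, $EF-FE=K-K^{-1}$, $\Delta K=K\otimes K$, $\Delta F=F\otimes1+K^{-1}\otimes F$, $\Delta E=E\otimes K+1\otimes E$. The two are dually paired by the Hopf pairing with $\langle X^it^jY^k,F^{i'}K^{j'}E^{k'}\rangle=\delta_{ii'}\delta_{kk'}q^{jj'}[i]_{q^{-1}}![k]_q!$,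 which identifies ${\mathfrak u}_q(sl_2)$ with the dual of ${\mathfrak c}_q[SL_2]$; $\{e_a\}$ is any basis of ${\mathfrak c}_q[SL_2]$ and $\{f^a\}$ the dual basis in ${\mathfrak u}_q(sl_2)$. $\int$ is the right integral on ${\mathfrak c}_q[SL_2]$ given on the basis by $\int X^\alpha t^\beta Y^\gamma=1$ if $\alpha=\gamma=n-1$, $\beta=1$, and $0$ otherwise. $[i]_q=(1-q^i)/(1-q)$, $[i]_q!=[i]_q\cdots[1]_q$. *)

(* Defs.v *)
From HB Require Import structures.
From mathcomp Require Import all_boot all_order all_algebra.
From mathcomp Require Import falgebra.
Set Implicit Arguments. Unset Strict Implicit. Unset Printing Implicit Defensive.
Import Order.TTheory GRing.Theory Num.Theory.
Local Open Scope ring_scope.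

Notation idx n := ('I_n * 'I_n * 'I_n)%type.

Definition qint (R : fieldType) (i : nat) (z : R) : R := (1 - z ^+ i) / (1 - z).
Definition qfact (R : fieldType) (i : nat) (z : R) : R :=
  \prod_(1 <= k < i.+1) qint k z.

Definition cmon (R : fieldType) (A : falgType R) (X t Y : A) (i j k : nat) : A :=
  X ^+ i * t ^+ j * Y ^+ k.
Definition umon (R : fieldType) (U : falgType R) (F K E : U) (i j k : nat) : U :=
  F ^+ i * K ^+ j * E ^+ k.

Definition cq_rels (R : fieldType) (n : nat) (q : R) (A : falgType R) (X t Y : A) :=
  [/\ X ^+ n = 0, Y ^+ n = 0, t ^+ n = 1 & Y * X = X * Y] /\
  (X * t = q *: (t * X) /\ Y * t = q *: (t * Y)).

Definition cq_pbw (R : fieldType) (n : nat) (A : falgType R) (X t Y : A) :=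
  basis_of fullv [seq cmon X t Y a.1.1 a.1.2 a.2 | a : idx n].

Definition uq_rels (R : fieldType) (n : nat) (q : R) (U : falgType R) (E F K : U) :=
  [/\ E ^+ n = 0, F ^+ n = 0 & K ^+ n = 1] /\
  [/\ K * E * K^-1 = q^-1 *: E, K * F * K^-1 = q *: F &
      E * F - F * E = K - K^-1].

Definition uq_pbw (R : fieldType) (n : nat) (U : falgType R) (E F K : U) :=
  basis_of fullv [seq umon F K E a.1.1 a.1.2 a.2 | a : idx n].

Definition is_cq_integral (R : fieldType) (n : nat) (A : falgType R) (X t Y : A)
    (intg : A -> R) :=
  (forall (c : R) (x y : A), intg (c *: x + y) = c * intg x + intg y) /\
  (forall a b c : 'I_n, intg (cmon X t Y a b c) =
     if [&& (a == n.-1 :> nat), (b == 1 :> nat) & (c == n.-1 :> nat)] then 1 else 0).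

Definition is_cu_pairing (R : fieldType) (n : nat) (q : R) (A U : falgType R)
    (X t Y : A) (E F K : U) (pair : A -> U -> R) :=
  [/\ (forall (c : R) (x y : A) (u : U), pair (c *: x + y) u = c * pair x u + pair y u),
      (forall (c : R) (x : A) (u v : U), pair x (c *: u + v) = c * pair x u + pair x v) &
      (forall i j k i' j' k' : 'I_n,
         pair (cmon X t Y i j k) (umon F K E i' j' k') =
         (i == i')%:R * (k == k')%:R * q ^+ (j * j') * qfact i q^-1 * qfact k q)].

Definition fourier (R : fieldType) (A U : falgType R) (I : finType)
    (intg : A -> R) (e : I -> A) (f : I -> U) (h : A) : U :=
  \sum_(a : I) intg (e a * h) *: f a.

(* Main.v *)
Require Import Defs.
From HB Require Import structures.
From mathcomp Require Import all_boot all_order all_algebra.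
From mathcomp Require Import falgebra.
From mathcomp Require Import zify ring.
Import Order.TTheory GRing.Theory Num.Theory.
Local Open Scope ring_scope.

Set Implicit Arguments. Unset Strict Implicit.

Lemma span_decomp_seq (K : fieldType) (V : vectType K) (I : eqType) (m : I -> V)
  (s : seq I) : uniq s -> forall v, v \in <<map m s>>%VS ->
  exists c : I -> K, v = \sum_(a <- s) c a *: m a.
Proof.
elim: s => [|x s IH] /=.
  by move=> _ v; rewrite span_nil memv0 => /eqP ->; exists (fun _ => 0); rewrite big_nil.
case/andP=> xs us v; rewrite span_cons => /memv_addP [u /vlineP [k ->] [w /(IH us) [c ->] ->]].
exists (fun a => if a == x then k else c a); rewrite big_cons eqxx; congr (_ + _).
apply: eq_big_seq => a ai; case: eqP => // ax; by move: xs; rewrite -ax ai.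
Qed.

Lemma span_decomp (K : fieldType) (V : vectType K) (I : finType) (m : I -> V) :
  basis_of fullv [seq m a | a : I] -> forall v, exists c : I -> K, v = \sum_a c a *: m a.
Proof.
move=> /andP [/eqP sp _] v.
have: v \in <<map m (enum I)>>%VS by rewrite /image_mem in sp; rewrite sp memvf.
move/(span_decomp_seq (m:=m) (enum_uniq I)) => [c ->]; exists c.
by rewrite big_enum.
Qed.

Lemma span_decomp' (K : fieldType) (V : vectType K) (I : finType) (m : I -> V) :
  basis_of fullv [seq m a | a <- enum I] -> forall v, exists c : I -> K, v = \sum_a c a *: m a.
Proof. exact: span_decomp. Qed.

Lemma lin0 (K : fieldType) (V : lmodType K) (f : V -> K)
  (hf : forall c x y, f (c *: x + y) = c * f x + f y) : f 0 = 0.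
Proof.
have := hf 1 0 0; rewrite scale1r addr0 mul1r => h.
by apply/esym/(@addrI _ (f 0)); rewrite addr0 -h.
Qed.

Lemma lin_sum (K : fieldType) (V : lmodType K) (T : Type) (f : V -> K)
  (hf : forall c x y, f (c *: x + y) = c * f x + f y) (r : seq T) (c : T -> K) (v : T -> V) :
  f (\sum_(a <- r) c a *: v a) = \sum_(a <- r) c a * f (v a).
Proof.
elim: r => [|x r IH]; first by rewrite !big_nil (lin0 hf).
by rewrite !big_cons hf IH.
Qed.

Lemma qcomm (K : fieldType) (A : algType K) (u v : A) (s : K) :
  u * v = s *: (v * u) -> forall i j, u ^+ i * v ^+ j = s ^+ (i * j) *: (v ^+ j * u ^+ i).
Proof.
move=> h.
have h1 : forall i, u ^+ i * v = s ^+ i *: (v * u ^+ i).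
  elim=> [|i IH]; first by rewrite !expr0 mulr1 mul1r scale1r.
  rewrite exprS -mulrA IH -scalerAr [u * (v * _)]mulrA h -scalerAl scalerA.
  by rewrite exprS mulrA mulrC.
move=> i; elim=> [|j IH]; first by rewrite muln0 !expr0 mulr1 mul1r scale1r.
rewrite [v ^+ j.+1]exprSr mulrA IH -scalerAl -[_ * u ^+ i * v]mulrA h1 -scalerAr scalerA -exprD mulnS addnC.
by rewrite mulrA -exprSr.
Qed.

Lemma table (R : fieldType) (n : nat) (q : R) (n_gt1 : (1 < n)%N) (hq0 : q != 0)
  (A : falgType R) (X t Y : A) (hA : cq_rels n q X t Y)
  (intg : A -> R) (hint : is_cq_integral n X t Y intg) (a b c al bt ga : 'I_n) :
  intg (cmon X t Y a b c * cmon X t Y al bt ga) =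
  if [&& (a + al == n.-1)%N, ((b + bt) %% n == 1)%N & (c + ga == n.-1)%N]
  then q ^+ (c * bt) / q ^+ (al * b) else 0.
Proof.
case: hA => [[hX hY ht hYX] [hXt hYt]].
case: hint => hlin hval.
have hYX' : Y * X = 1 *: (X * Y) by rewrite scale1r.
have cYX := qcomm hYX' c al; rewrite expr1n scale1r in cYX.
have cYt := qcomm hYt c bt.
have cXt := qcomm hXt al b.
have ctX : t ^+ b * X ^+ al = (q ^+ (al * b))^-1 *: (X ^+ al * t ^+ b).
  by rewrite cXt scalerA mulVf ?scale1r // expf_neq0.
have e1 : cmon X t Y a b c * cmon X t Y al bt ga =
  (q ^+ (c * bt) / q ^+ (al * b)) *: (X ^+ (a + al) * t ^+ (b + bt) * Y ^+ (c + ga)).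
  rewrite /cmon !mulrA -[X ^+ a * t ^+ b * Y ^+ c * X ^+ al]mulrA cYX.
  rewrite !mulrA -[X ^+ a * t ^+ b * X ^+ al]mulrA ctX.
  rewrite -[X ^+ a * _ * Y ^+ c * t ^+ bt]mulrA cYt.
  rewrite -scalerAr -?scalerAl -?scalerAr -?scalerAl -?scalerAl -?scalerAl scalerA mulrC.
  by rewrite !exprD !mulrA.
have n_gt0 : (0 < n)%N by lia.
have tm : forall m, t ^+ m = t ^+ (m %% n).
  by move=> m; rewrite {1}(divn_eq m n) exprD mulnC exprM ht expr1n mul1r.
have lin0' := lin0 hlin.
have linZ : forall s x, intg (s *: x) = s * intg x.
  by move=> s x; rewrite -[s *: x]addr0 hlin lin0' addr0.
rewrite e1 linZ.
case: (ltnP (a + al) n) => ha; last first.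
  have -> : X ^+ (a + al) = 0 by rewrite -(subnKC ha) exprD hX mul0r.
  rewrite !mul0r lin0' mulr0; case: ifP => // /and3P [/eqP h1 _ _]; lia.
case: (ltnP (c + ga) n) => hc; last first.
  have -> : Y ^+ (c + ga) = 0 by rewrite -(subnKC hc) exprD hY mul0r.
  rewrite !mulr0 lin0' mulr0; case: ifP => // /and3P [_ _ /eqP h1]; lia.
rewrite tm.
have := hval (Ordinal ha) (Ordinal (ltn_pmod (b + bt) n_gt0)) (Ordinal hc).
rewrite /cmon /= => ->.
by case: ifP; rewrite ?mulr1 ?mulr0.
Qed.

Lemma ortho (R : fieldType) (n : nat) (q : R) (q_prim : n.-primitive_root q) (k : nat) :
  \sum_(l < n) (q ^+ k) ^+ l = if (n %| k)%N then n%:R else 0.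
Proof.
case: ifP => hk.
  have -> : q ^+ k = 1 by apply/eqP; rewrite -(prim_order_dvd q_prim).
  under eq_bigr do rewrite expr1n.
  by rewrite sumr_const card_ord.
have hz : q ^+ k - 1 != 0 by rewrite subr_eq0 -(prim_order_dvd q_prim) hk.
have := subrX1 (q ^+ k) n.
rewrite exprAC (prim_expr_order q_prim) expr1n subrr => /esym /eqP.
by rewrite mulf_eq0 (negbTE hz) /= => /eqP.
Qed.

Lemma qfact_neq0 (R : fieldType) (n : nat) (z : R)
  (hz : forall k, (0 < k < n)%N -> z ^+ k != 1) (i : nat) : (i < n)%N -> qfact i z != 0.
Proof.
move=> hi; rewrite /qfact prodf_seq_neq0; apply/allP => k; rewrite mem_index_iota => hk /=.
rewrite /qint mulf_neq0 // ?invr_neq0 // subr_eq0 eq_sym.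
  by apply: hz; lia.
by rewrite -(expr1 z); apply: hz; lia.
Qed.

Lemma sum_delta (R : fieldType) (T : finType) (G : T -> R) (x0 : T) :
  \sum_y (if y == x0 then G y else 0) = G x0.
Proof. by rewrite -big_mkcond big_pred1_eq. Qed.

Unset Implicit Arguments. Set Strict Implicit.

Theorem proposition5p2 (R : fieldType) (n : nat) (q : R)
  (n_gt1 : (1 < n)%N) (q_prim : n.-primitive_root q)
  (A : falgType R) (X t Y : A) (hA : cq_rels n q X t Y) (bA : cq_pbw n X t Y)
  (U : falgType R) (E F K : U) (hU : uq_rels n q E F K) (bU : uq_pbw n E F K)
  (intg : A -> R) (hint : is_cq_integral n X t Y intg)
  (pair : A -> U -> R) (hpair : is_cu_pairing n q X t Y E F K pair)
  (I : finType) (e : I -> A) (f : I -> U)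
  (be : basis_of fullv [seq e a | a <- enum I])
  (hdual : forall a b : I, pair (e b) (f a) = (a == b)%:R) :
  bijective (fourier intg e f) /\
  (forall al bt ga : 'I_n,
     fourier intg e f (cmon X t Y al bt ga) =
     \sum_(l < n)
        (q ^ (- ((l + al)%:Z * (1 - bt%:Z)) + bt%:Z * (n.-1 - ga)%:Z)
         / (n%:R * qfact (n.-1 - al) q^-1 * qfact (n.-1 - ga) q))
        *: umon F K E (n.-1 - al) l (n.-1 - ga)).
Proof.
have n_gt0 : (0 < n)%N by lia.
have hqn : q ^+ n = 1 := prim_expr_order q_prim.
have hq0 : q != 0.
  apply/eqP => q0; move: hqn; rewrite q0 expr0n; case: (n) n_gt0 => // m _ /=.
  by move/eqP; rewrite eq_sym oner_eq0.
have hn0 : n%:R != 0 :> R := prim_root_natf_neq0 q_prim.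
have hqk : forall k, (0 < k < n)%N -> q ^+ k != 1.
  by move=> k hk; rewrite -(prim_order_dvd q_prim) gtnNdvd //; lia.
have hqik : forall k, (0 < k < n)%N -> q^-1 ^+ k != 1.
  by move=> k hk; rewrite exprVn invr_eq1 hqk.
have qf1 : forall i, (i < n)%N -> qfact i q != 0 by move=> i; apply: qfact_neq0.
have qf2 : forall i, (i < n)%N -> qfact i q^-1 != 0 by move=> i; apply: qfact_neq0.
case: hpair => hpl hpr hpv.
case: (hint) => hil hiv.
pose F' := fourier intg e f.
have psl : forall (T : Type) (r : seq T) (c : T -> R) (v : T -> A) u,
    pair (\sum_(a <- r) c a *: v a) u = \sum_(a <- r) c a * pair (v a) u.
  move=> T r c v u; exact: (lin_sum (f := fun x => pair x u) (fun c x y => hpl c x y u)).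
have psr : forall (T : Type) (r : seq T) (c : T -> R) (v : T -> U) x,
    pair x (\sum_(a <- r) c a *: v a) = \sum_(a <- r) c a * pair x (v a).
  move=> T r c v x; exact: (lin_sum (f := fun u => pair x u) (hpr ^~ x)).
have isum : forall (T : Type) (r : seq T) (c : T -> R) (v : T -> A),
    intg (\sum_(a <- r) c a *: v a) = \sum_(a <- r) c a * intg (v a).
  move=> T r c v; exact: (lin_sum (f := intg) hil).
have prB : forall x u v, pair x (u - v) = pair x u - pair x v.
  by move=> x u v; rewrite addrC -scaleN1r hpr mulN1r addrC.
have key : forall x h, pair x (F' h) = intg (x * h).
  move=> x h; have [cx ->] := span_decomp' be x.
  rewrite psl mulr_suml.
  under [in RHS]eq_bigr do rewrite -scalerAl.
  rewrite isum; apply: eq_bigr => b _; congr (_ * _).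
  rewrite /F' /fourier psr.
  under eq_bigr do rewrite hdual.
  by rewrite -(sum_delta (fun a => intg (e a * h))); apply: eq_bigr => a _; case: eqP; rewrite ?mulr1 ?mulr0.
pose cm := fun x : idx n => cmon X t Y x.1.1 x.1.2 x.2.
pose um := fun x : idx n => umon F K E x.1.1 x.1.2 x.2.
have nondeg : forall u, (forall x, pair (cm x) u = 0) -> u = 0.
  move=> u hu; have [d du] := span_decomp (m := um) bU u; rewrite du.
  suff hd : forall y, d y = 0 by apply: big1 => y _; rewrite hd scale0r.
  move=> [[a m] c].
  have hs : forall j : 'I_n, \sum_y d y * ((a == y.1.1)%:R * (c == y.2)%:R
       * q ^+ (j * y.1.2) * qfact a q^-1 * qfact c q) = 0.
    move=> j; transitivity (pair (cm (a, j, c)) u); last exact: hu.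
    rewrite du psr; apply: eq_bigr => y _; congr (_ * _).
    by rewrite hpv.
  have : \sum_(j < n) q ^+ (j * (n - m)) * \sum_y d y * ((a == y.1.1)%:R * (c == y.2)%:R
       * q ^+ (j * y.1.2) * qfact a q^-1 * qfact c q) = 0.
    by apply: big1 => j _; rewrite hs mulr0.
  under eq_bigr do rewrite mulr_sumr.
  rewrite exchange_big /=.
  under eq_bigr => y _.
    have -> : \sum_(i < n) q ^+ (i * (n - m)) * (d y * ((a == y.1.1)%:R * (c == y.2)%:R *
       q ^+ (i * y.1.2) * qfact a q^-1 * qfact c q)) = 
       d y * (a == y.1.1)%:R * (c == y.2)%:R * qfact a q^-1 * qfact c q *
       \sum_(i < n) (q ^+ (y.1.2 + (n - m))) ^+ i.
      rewrite mulr_sumr; apply: eq_bigr => i _.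
      rewrite -exprM (mulnC _ i) mulnDr exprD; ring.
    rewrite ortho //.
  over.
  rewrite (bigD1 (a, m, c)) //= big1 ?addr0; last first.
    move=> [[a' m'] c'] /=; rewrite !xpair_eqE /= => hne.
    case: (eqVneq a a') hne => [<-|_]; last by rewrite !mulr0 !mul0r.
    case: (eqVneq c c') => [<-|_]; last by rewrite !mulr0 !mul0r.
    rewrite ?eqxx ?andbT /= => hne.
    rewrite (_ : (n %| m' + (n - m))%N = false) ?mulr0 //.
    apply/negbTE; apply: contra hne => hd; apply/eqP/val_inj => /=.
    have hm := ltn_ord m; have hm' := ltn_ord m'.
    case: (ltngtP m' m) => // h.
      by move: hd; rewrite gtnNdvd //; lia.
    move: hd; rewrite (_ : (m' + (n - m)) = (m' - m) + n)%N; last by lia.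
    by rewrite dvdn_addl // gtnNdvd //; lia.
  rewrite !eqxx addnC subnK; last by apply: ltnW.
  rewrite dvdnn !mulr1 => /eqP; rewrite !mulf_eq0 (negbTE hn0) !(negbTE (qf1 _ _)) ?(negbTE (qf2 _ _)) //=.
  by rewrite !orbF => /eqP.
have p1 : forall i : 'I_n, (n.-1 - i < n)%N by move=> i; lia.
pose sig := fun x : idx n => ((Ordinal (p1 x.1.1), Ordinal (ltn_pmod (n.+1 - x.1.2) n_gt0)),
                              Ordinal (p1 x.2)) : idx n.
have hcond : forall x y : idx n,
    [&& (x.1.1 + y.1.1 == n.-1)%N, ((x.1.2 + y.1.2) %% n == 1)%N & (x.2 + y.2 == n.-1)%N]
    = (x == sig y).
  move=> [[x1 x2] x3] [[y1 y2] y3]; rewrite /sig !xpair_eqE /= -!val_eqE /=.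
  have -> : (x1 + y1 == n.-1)%N = (x1 == n.-1 - y1 :> nat)%N by have hy := ltn_ord y1; apply/eqP/eqP; lia.
  have -> : (x3 + y3 == n.-1)%N = (x3 == n.-1 - y3 :> nat)%N by have hy := ltn_ord y3; apply/eqP/eqP; lia.
  rewrite -andbA; congr (_ && (_ && _)).
  have hy2 := ltn_ord y2; have hx2 := ltn_ord x2.
  rewrite -[X in _ = (X == _)](modn_small hx2) -(eqn_modDr y2) subnK; last by lia.
  by rewrite -[n.+1]add1n modnDr (modn_small n_gt1).
have hsym : forall x y : idx n, (x == sig y) = (y == sig x).
  by move=> x y; rewrite -!hcond (addnC x.1.1) (addnC x.1.2) (addnC x.2).
have sigK : forall x, sig (sig x) = x.
  by move=> x; apply/eqP; rewrite eq_sym -hsym.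
pose W := fun x y : idx n => q ^+ (x.2 * y.1.2) / q ^+ (y.1.1 * x.1.2).
have W0 : forall x y, W x y != 0 by move=> x y; rewrite mulf_neq0 ?invr_neq0 ?expf_neq0.
have tab : forall x y, intg (cm x * cm y) = if x == sig y then W x y else 0.
  by move=> x y; rewrite -hcond; apply: table.
pose g := fun u : U => \sum_(y : idx n) ((W (sig y) y)^-1 * pair (cm (sig y)) u) *: cm y.
split.
  exists g.
    move=> h; have [d ->] := span_decomp (m := cm) bA h.
    rewrite /g; apply: eq_bigr => y _; congr (_ *: _).
    rewrite key mulr_sumr.
    under eq_bigr do rewrite -scalerAr.
    rewrite isum.
    under eq_bigr do rewrite tab (inj_eq (can_inj sigK)) eq_sym (fun_if (fun r => d _ * r)) mulr0.
    by rewrite sum_delta mulrCA mulVf ?mulr1.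
  move=> u; apply/eqP; rewrite -subr_eq0; apply/eqP; apply: nondeg => x.
  rewrite prB key /g mulr_sumr.
  under eq_bigr do rewrite -scalerAr.
  rewrite isum.
  under eq_bigr do rewrite tab hsym (fun_if (fun r => _ * r)) mulr0.
  by rewrite sum_delta !sigK mulrAC mulVf // mul1r subrr.
have qexp : forall z1 z2 : int, (exists k : int, z1 = z2 + k * n%:Z) -> q ^ z1 = q ^ z2.
  move=> z1 z2 [k ->]; rewrite expfzDr // [k * _]mulrC -exprz_exp.
  by rewrite (_ : q ^ n%:Z = q ^+ n) // hqn exp1rz mulr1.
move=> al bt ga.
apply/eqP; rewrite -subr_eq0; apply/eqP; apply: nondeg => [[[a b] c]].
rewrite prB key /cm /= (table n_gt1 hq0 hA hint) psr.
have hp : forall l : 'I_n, pair (cmon X t Y a b c) (umon F K E (n.-1 - al) l (n.-1 - ga)) =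
    (a == Ordinal (p1 al))%:R * (c == Ordinal (p1 ga))%:R * q ^+ (b * l) * qfact a q^-1 * qfact c q.
  by move=> l; exact: (hpv a b c (Ordinal (p1 al)) l (Ordinal (p1 ga))).
have ha : (a == Ordinal (p1 al)) = (a + al == n.-1)%N.
  by rewrite -val_eqE /=; have hy := ltn_ord al; apply/eqP/eqP; lia.
have hc : (c == Ordinal (p1 ga)) = (c + ga == n.-1)%N.
  by rewrite -val_eqE /=; have hy := ltn_ord ga; apply/eqP/eqP; lia.
under eq_bigr do rewrite hp ha hc.
case: (eqVneq (a + al)%N n.-1) => [ha'|_]; last first.
  by rewrite /= big1 ?subrr // => l _; rewrite ?mulr0 ?mul0r ?mulr0n ?mul0rn ?mulr0 ?mul0r.
case: (eqVneq (c + ga)%N n.-1) => [hc'|_]; last first.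
  by rewrite /= andbF big1 ?subrr // => l _; rewrite ?mulr0 ?mul0r ?mulr0n ?mul0rn ?mulr0 ?mul0r.
rewrite /= andbT.
have eA : (a : nat) = (n.-1 - al)%N by lia.
have eC : (c : nat) = (n.-1 - ga)%N by lia.
rewrite eA eC.
set Wz : int := - (al%:Z * (1 - bt%:Z)) + bt%:Z * (n.-1 - ga)%:Z.
set KK := (b + bt + n.-1)%N.
have hterm : forall i : 'I_n,
    q ^ (- ((i + al)%N%:Z * (1 - bt%:Z)) + bt%:Z * (n.-1 - ga)%N%:Z) /
     (n%:R * qfact (n.-1 - al) q^-1 * qfact (n.-1 - ga) q) *
     (1 * 1 * q ^+ (b * i) * qfact (n.-1 - al) q^-1 * qfact (n.-1 - ga) q)
    = (q ^+ KK) ^+ i * q ^ Wz / n%:R.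
  move=> i.
  have hq : q ^ (- ((i + al)%N%:Z * (1 - bt%:Z)) + bt%:Z * (n.-1 - ga)%N%:Z) * q ^+ (b * i)
      = (q ^+ KK) ^+ i * q ^ Wz.
    rewrite -exprM (_ : q ^+ (b * i) = q ^ ((b * i)%N%:Z)) // -expfzDr //.
    rewrite (_ : q ^+ (KK * i) = q ^ ((KK * i)%N%:Z)) // -expfzDr //.
    apply: qexp; exists (- (i%:Z)); rewrite /Wz /KK; lia.
  have h1 := qf1 _ (p1 ga); have h2 := qf2 _ (p1 al).
  rewrite -hq; field.
  by rewrite hn0 h1 h2.
under eq_bigr do rewrite hterm.
rewrite -big_distrl -big_distrl /= ortho //.
have hK : (n %| KK)%N = ((b + bt) %% n == 1)%N.
  rewrite /KK; have hb := ltn_ord b; have hbt := ltn_ord bt.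
  case: (posnP (b + bt)) => hs.
    rewrite hs add0n mod0n gtnNdvd //; lia.
  rewrite -(modn_small n_gt1) eqn_mod_dvd; last by lia.
  rewrite (_ : (b + bt + n.-1 = (b + bt - 1) + n)%N); last by lia.
  by rewrite dvdn_addl.
rewrite hK; case: ifP => hb; last by rewrite !mul0r subrr.
rewrite mulrAC divff // mul1r; apply/eqP; rewrite subr_eq0; apply/eqP.
rewrite (_ : q ^+ ((n.-1 - ga) * bt) / q ^+ (al * b) = q ^ (((n.-1 - ga) * bt)%N%:Z - (al * b)%N%:Z)); last first.
  by rewrite expfzDr // -invr_expz.
apply: qexp.
move: hb; rewrite -hK => /dvdnP [k hk].
have hk' : (al * KK = al * (k * n))%N by rewrite hk.
rewrite /KK in hk'.
exists (- (al%:Z * (k%:Z - 1))); rewrite /Wz; lia.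
Qed.
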